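(* Let $D=(V,A)$ be a digraph, let $C\subseteq V$ be a clique-cutset of $D$, and let $B,B'$ be a bipartition of $V\setminus C$ such that $B$ is the vertex set of a connected component of $D[V\setminus C]$. Suppose there exist subsets $K_1,\dots,K_{|C|+1}$ of $V$ such that for every $i\in\{1,\ldots,|C|+1\}$, $K_i$ is a kernel of $D\left[B\cup\left(C\setminus\bigcup_{j=1}^{i-1}K_j\right)\right]$, and suppose that $D\left[B'\cup\left(C\cap\bigcup_{j=1}^{|C|}K_j\right)\right]$ has a kernel $K$. Then there exists $i\in\{1,\ldots,|C|+1\}$ such that $K\cup K_i$ is a kernel of $D$.
   Context: For a digraph $D=(V,A)$, $D[W]$ denotes the subdigraph induced by $W\subseteq V$. A set $S\subseteq V$ is stable if no two vertices of $S$ are adjacent (joined by an arc in either direction), and absorbing if for every $u\in V\setminus S$ there is $v\in S$ with $(u,v)\in A$; a kernel is a set that is both stable and absorbing. A clique-cutset of $D$ is a set $C\subseteq V$ such that the vertices of $C$ are pairwise adjacent and $D[V\setminus C]$ is disconnected. *)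

(* Defs.v *)
From mathcomp Require Import all_boot.
Set Implicit Arguments. Unset Strict Implicit. Unset Printing Implicit Defensive.

Section Digraph.
Variables (T : finType) (A : rel T).

Definition adjacent (u v : T) : bool := (u != v) && (A u v || A v u).

Definition stable (S : {set T}) : Prop :=
  forall u v, u \in S -> v \in S -> ~~ adjacent u v.

(* S is a kernel of the induced subdigraph D[W] *)
Definition kernel_in (W S : {set T}) : Prop :=
  [/\ S \subset W, stable S &
      forall u, u \in W -> u \notin S -> exists2 v, v \in S & A u v].

Definition kernel (S : {set T}) : Prop := kernel_in [set: T] S.

Definition clique (C : {set T}) : Prop :=
  forall u v, u \in C -> v \in C -> u != v -> adjacent u v.

Definition induced_adj (W : {set T}) : rel T :=
  fun u v => [&& u \in W, v \in W & adjacent u v].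

Definition disconnected_in (W : {set T}) : Prop :=
  exists x y, [/\ x \in W, y \in W & ~~ connect (induced_adj W) x y].

Definition clique_cutset (C : {set T}) : Prop :=
  clique C /\ disconnected_in (~: C).

Definition component_of (W B : {set T}) : Prop :=
  exists2 x, x \in W &
    B = [set y | (y \in W) && connect (induced_adj W) x y].

End Digraph.

(* Main.v *)
Require Import Defs.
From mathcomp Require Import all_boot.

Section Helpers.
Variables (T : finType) (A : rel T).

Lemma mem_bigcup_seq (F : nat -> {set T}) (s : seq nat) x :
  (x \in \big[@setU T/set0]_(j <- s) F j) = has (fun j => x \in F j) s.
Proof.
elim: s => [|a s IH]; first by rewrite big_nil inE.
by rewrite big_cons inE IH.
Qed.

Lemma bigcup_natP (F : nat -> {set T}) m n x :
  reflect (exists2 j, m <= j < n & x \in F j) (x \in \bigcup_(m <= j < n) F j).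
Proof.
rewrite mem_bigcup_seq; apply: (iffP hasP) => [[j]|[j]];
  rewrite ?mem_index_iota => hj hx; by exists j; rewrite ?mem_index_iota.
Qed.

Lemma adjC u v : adjacent A u v = adjacent A v u.
Proof. by rewrite /adjacent eq_sym orbC. Qed.

Lemma pigeon (B C : {set T}) (Ks : nat -> {set T}) (x0 : T) :
  (forall b, b \in B -> b \notin C) ->
  (forall i, 1 <= i <= #|C|.+1 ->
     kernel_in A (B :|: (C :\: \bigcup_(1 <= j < i) Ks j)) (Ks i)) ->
  exists2 i, 1 <= i <= #|C|.+1 & forall v, v \in Ks i -> v \notin C.
Proof.
move=> BnC HK.
case: (boolP [exists i : 'I_#|C|.+1, [forall v, (v \in Ks i.+1) ==> (v \notin C)]]).
  move/existsP=> [i /forallP hi]; exists i.+1; first by rewrite /= ltn_ord.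
  by move=> v vK; have := hi v; rewrite vK.
rewrite negb_exists => /forallP hneg.
pose f (i : 'I_#|C|.+1) := odflt x0 [pick v in Ks i.+1 :&: C].
have fP : forall i, f i \in Ks i.+1 :&: C.
  move=> i; rewrite /f; case: pickP => [v //|none]; exfalso.
  move: (hneg i); rewrite negb_forall => /existsP [v].
  rewrite negb_imply negbK => /andP[h1 h2].
  by have := none v; rewrite !inE h1 h2.
have key : forall i j : 'I_#|C|.+1, i < j -> f i != f j.
  move=> i j lij; apply/eqP => e.
  have := fP j; rewrite inE => /andP[fj fC].
  have [sub _ _] := HK j.+1 (ltn_ord j).
  move: (subsetP sub _ fj); rewrite !inE fC andbT.
  have -> : (f j \in B) = false by apply/negbTE; apply/negP => /BnC; rewrite fC.
  move=> /= /negP; apply; apply/bigcup_natP; exists i.+1; first by rewrite /= ltnS.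
  by rewrite -e; have := fP i; rewrite inE => /andP[].
have finj : injective f.
  move=> i j e; case: (ltngtP i j) => h.
  - by have := key i j h; rewrite e eqxx.
  - by have := key j i h; rewrite e eqxx.
  - exact: ord_inj.
have : #|[set f i | i in 'I_#|C|.+1]| <= #|C|.
  apply: subset_leq_card; apply/subsetP => v /imsetP [i _ ->].
  by have := fP i; rewrite inE => /andP[].
by rewrite card_imset // card_ord ltnn.
Qed.

End Helpers.

Theorem lemma1 (T : finType) (A : rel T) (C B B' : {set T})
  (Ks : nat -> {set T}) (K : {set T}) :
  clique_cutset A C ->
  B :|: B' = ~: C -> [disjoint B & B'] ->
  component_of A (~: C) B ->
  (forall i, 1 <= i <= #|C|.+1 ->
     kernel_in A (B :|: (C :\: \bigcup_(1 <= j < i) Ks j)) (Ks i)) ->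
  kernel_in A (B' :|: (C :&: \bigcup_(1 <= j < #|C|.+1) Ks j)) K ->
  exists2 i, 1 <= i <= #|C|.+1 & kernel A (K :|: Ks i).
Proof.
move=> [clC _] BUB' disBB' [x xnC defB] HK [subK stK absK].
have BnC : forall b, b \in B -> b \notin C.
  move=> b bB; have : b \in B :|: B' by rewrite inE bB.
  by rewrite BUB' inE.
have B'nC : forall b, b \in B' -> b \notin C.
  move=> b bB; have : b \in B :|: B' by rewrite inE bB orbT.
  by rewrite BUB' inE.
have noadj : forall b b', b \in B -> b' \in B' -> ~~ adjacent A b b'.
  move=> b b' bB b'B; apply/negP => ad.
  have : b' \in B.
    move: bB; rewrite defB !inE => /andP[bW cb].
    have b'W : b' \in ~: C by rewrite inE B'nC.
    have bW' : b \in ~: C by rewrite inE.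
    rewrite -in_setC b'W /=; apply: connect_trans cb (connect1 _).
    by rewrite /induced_adj bW' b'W ad.
  by move=> b'B2; have := disjointFr disBB' b'B2; rewrite b'B.
have cst : forall S, stable A S -> forall u v, u \in S -> v \in S ->
    u \in C -> v \in C -> u = v.
  move=> S stS u v uS vS uC vC; apply/eqP; apply: contraT => neq.
  by have := stS u v uS vS; rewrite clC.
set n := #|C|.
case: (pickP [pred v | v \in K :&: C]) => [c /= | none].
- rewrite inE => /andP[cK cC].
  have : c \in B' :|: (C :&: \bigcup_(1 <= j < n.+1) Ks j) by apply: (subsetP subK).
  have cB' : c \in B' = false by apply/negP => /B'nC; rewrite cC.
  rewrite !inE cB' cC /= => /bigcup_natP [i hi cKi].
  have hi' : 1 <= i <= n.+1 by case/andP: hi => -> /ltnW ->.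
  exists i => //.
  have [subKi stKi absKi] := HK i hi'.
  split; first exact: subsetT.
  + have cross : forall u v, u \in K -> v \in Ks i -> ~~ adjacent A u v.
      move=> u v uK vKi.
      have uW := subsetP subK u uK; have vW := subsetP subKi v vKi.
      case: (boolP (u \in C)) => uC.
        by rewrite (cst K stK u c uK cK uC cC); apply: stKi.
      case: (boolP (v \in C)) => vC.
        by rewrite (cst _ stKi v c vKi cKi vC cC); apply: stK.
      move: uW vW; rewrite !inE (negbTE uC) (negbTE vC) /= !andbF !orbF => uB' vB.
      by rewrite adjC; apply: noadj.
    move=> u v; rewrite !inE => /orP[uK|uKi] /orP[vK|vKi].
    * exact: stK.
    * exact: cross.
    * by rewrite adjC; apply: cross.
    * exact: stKi.
  + move=> u _; rewrite inE negb_or => /andP[uK uKi].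
    have fromK : u \in B' :|: (C :&: \bigcup_(1 <= j < n.+1) Ks j) ->
        exists2 v, v \in K :|: Ks i & A u v.
      by move=> uW; have [v vK uv] := absK u uW uK; exists v; rewrite ?inE ?vK.
    have fromKi : u \in B :|: (C :\: \bigcup_(1 <= j < i) Ks j) ->
        exists2 v, v \in K :|: Ks i & A u v.
      by move=> uW; have [v vK uv] := absKi u uW uKi; exists v; rewrite ?inE ?vK ?orbT.
    case: (boolP (u \in C)) => uC.
      case: (boolP (u \in \bigcup_(1 <= j < i) Ks j)) => hu.
        apply: fromK; rewrite !inE uC /=; apply/orP; right.
        case/bigcup_natP: hu => j hj uj; apply/bigcup_natP; exists j => //.
        case/andP: hj => -> /= ji; apply: (ltn_trans ji); by case/andP: hi.
      by apply: fromKi; rewrite !inE uC hu orbT.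
    have : u \in ~: C by rewrite inE.
    rewrite -BUB' inE => /orP[uB|uB'].
      by apply: fromKi; rewrite inE uB.
    by apply: fromK; rewrite inE uB'.
- have KnC : forall u, u \in K -> u \notin C.
    by move=> u uK; apply/negP => uC; have := none u; rewrite !inE uK uC.
  have [i hi KiC] := @pigeon T A B C Ks x BnC HK.
  exists i => //.
  have [subKi stKi absKi] := HK i hi.
  have KB' : forall u, u \in K -> u \in B'.
    move=> u uK; have := subsetP subK u uK; rewrite !inE (negbTE (KnC u uK)) /=.
    by rewrite ?orbF ?andbF.
  have KiB : forall u, u \in Ks i -> u \in B.
    move=> u uK; have := subsetP subKi u uK; rewrite !inE (negbTE (KiC u uK)) /=.
    by rewrite andbF orbF.
  split; first exact: subsetT.
  + move=> u v; rewrite !inE => /orP[uK|uKi] /orP[vK|vKi].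
    * exact: stK.
    * by rewrite adjC; apply: noadj; [apply: KiB|apply: KB'].
    * by apply: noadj; [apply: KiB|apply: KB'].
    * exact: stKi.
  + move=> u _; rewrite inE negb_or => /andP[uK uKi].
    have fromK : u \in B' :|: (C :&: \bigcup_(1 <= j < n.+1) Ks j) ->
        exists2 v, v \in K :|: Ks i & A u v.
      by move=> uW; have [v vK uv] := absK u uW uK; exists v; rewrite ?inE ?vK.
    have fromKi : u \in B :|: (C :\: \bigcup_(1 <= j < i) Ks j) ->
        exists2 v, v \in K :|: Ks i & A u v.
      by move=> uW; have [v vK uv] := absKi u uW uKi; exists v; rewrite ?inE ?vK ?orbT.
    case: (boolP (u \in C)) => uC.
      case: (boolP (u \in \bigcup_(1 <= j < n.+1) Ks j)) => hu.
        by apply: fromK; rewrite !inE uC hu orbT.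
      apply: fromKi; rewrite !inE uC andbT; apply/orP; right.
      apply: contra hu => /bigcup_natP [j hj uj]; apply/bigcup_natP; exists j => //.
      case/andP: hj => -> /= ji; apply: (leq_trans ji); by case/andP: hi.
    have : u \in ~: C by rewrite inE.
    rewrite -BUB' inE => /orP[uB|uB'].
      by apply: fromKi; rewrite inE uB.
    by apply: fromK; rewrite inE uB'.
Qed.
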